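(* Let $d\geq 3$ and let $A\in\mathrm{Sym}^d(\mathbb{R}^n)$ be an orthogonal tensor. Then $n=1$ or $n=2$. Moreover, for $n=2$ the orthogonal tensors in $\mathrm{Sym}^d(\mathbb{R}^2)$ are exactly the tensors $(\rho,\dots,\rho)\cdot A_0$ with $\rho\in O(2)$, where $A_0$ is the symmetric tensor with entries \[ (A_0)_{i_1\dots i_d}=\begin{cases}(-1)^k & \text{if }\#\{j: i_j=2\}=2k,\\ 0&\text{otherwise.}\end{cases} \] Equivalently, these are the tensors associated with the forms $\rho^*\mathrm{Ch}_{d,2}$, $\rho\in O(2)$.
   Context: Orthogonal tensors: \begin{itemize} \item For a tensor $A\in\otimes_{j=1}^d\mathbb{R}^n$ and $u\in\mathbb{R}^n$, the contraction $A\times_j u$ is the order-$(d-1)$ tensor $\big(\sum_{i_j}a_{i_1\dots i_j\dots i_d}u_{i_j}\big)$. \item An $n\times n$ matrix ($d=2$) is orthogonal in the usual sense. \item For $d\geq 3$, an $n^d$-tensor $A$ is orthogonal if $A\times_j u$ is orthogonal for every $j=1,\dots,d$ and every unit vector $u\in\mathbb{R}^n$. \end{itemize} The group $O(n)\times\cdots\times O(n)$ acts by \[ \big((\rho^{(1)},\dots,\rho^{(d)})\cdot A\big)_{i_1\dots i_d}=\sum_{j_1,\dots,j_d}\rho^{(1)}_{i_1j_1}\cdots\rho^{(d)}_{i_dj_d}a_{j_1\dots j_d}. \] The binary Chebyshev form is $\mathrm{Ch}_{d,2}(x_1,x_2)=\sum_{k=0}^{\lfloor d/2\rfloor}\binom{d}{2k}(-1)^kx_1^{d-2k}x_2^{2k}$.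 For a form $p$ and $\rho\in O(2)$, $(\rho^*p)(x)=p(\rho^{-1}x)$. The symmetric tensor $A$ associated with a form $p$ satisfies $p(x)=\langle A,x\otimes\cdots\otimes x\rangle_F$. *)

(* Defs.v *)
From HB Require Import structures.
From mathcomp Require Import all_boot all_order all_algebra all_fingroup.
Set Implicit Arguments. Unset Strict Implicit. Unset Printing Implicit Defensive.
Import Order.TTheory GRing.Theory Num.Theory.
Local Open Scope ring_scope.

Definition midx (n d : nat) := {ffun 'I_d -> 'I_n}.

Definition tensor (R : Type) (n d : nat) := midx n d -> R.

Definition ins_idx (n d : nat) (j : 'I_d.+1) (i : 'I_n) (t : midx n d) : midx n d.+1 :=
  [ffun k : 'I_d.+1 => if unlift j k is Some k' then t k' else i].

Definition contract (R : nzRingType) (n d : nat) (j : 'I_d.+1) (u : 'I_n -> R)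
  (A : tensor R n d.+1) : tensor R n d :=
  fun t => \sum_(i < n) A (ins_idx j i t) * u i.

Definition unit_vec (R : nzRingType) (n : nat) (u : 'I_n -> R) : Prop :=
  \sum_(i < n) u i ^+ 2 = 1.

Definition idx2 (n : nat) (i j : 'I_n) : midx n 2 :=
  [ffun k : 'I_2 => if val k == 0%N then i else j].

Definition mat_of (R : nzRingType) (n : nat) (A : tensor R n 2) : 'M[R]_n :=
  \matrix_(i, j) A (idx2 i j).

Definition orthogonal_mx (R : nzRingType) (n : nat) (M : 'M[R]_n) : Prop :=
  M *m M^T = 1%:M.

(* Orthogonal tensors: for d = 2 orthogonal matrices; for d >= 3 every
   contraction with a unit vector along every slot is orthogonal.
   (Orders 0 and 1 are not covered by the definition; set to False.) *)
Fixpoint orthogonal_tensor_aux (R : nzRingType) (n d : nat) : tensor R n d.+2 -> Prop :=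
  match d return tensor R n d.+2 -> Prop with
  | 0 => fun A => orthogonal_mx (mat_of A)
  | d'.+1 => fun A => forall (j : 'I_d'.+3) (u : 'I_n -> R),
               unit_vec u -> orthogonal_tensor_aux (contract j u A)
  end.

Definition orthogonal_tensor (R : nzRingType) (n d : nat) : tensor R n d -> Prop :=
  match d return tensor R n d -> Prop with
  | 0 | 1 => fun _ => False
  | d'.+2 => @orthogonal_tensor_aux R n d'
  end.

Definition symmetric_tensor (R : Type) (n d : nat) (A : tensor R n d) : Prop :=
  forall (s : {perm 'I_d}) (t : midx n d), A [ffun k => t (s k)] = A t.

Definition act_diag (R : nzRingType) (n d : nat) (rho : 'M[R]_n) (A : tensor R n d)
  : tensor R n d :=
  fun i => \sum_(j : midx n d) (\prod_(k < d) rho (i k) (j k)) * A j.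

(* A_0 in Sym^d(R^2): entry (-1)^k if the number of slots equal to the
   second basis index is 2k, and 0 otherwise.  ('I_2 index 1 = paper's 2.) *)
Definition A0 (R : nzRingType) (d : nat) : tensor R 2 d :=
  fun i => let c := #|[set k | val (i k) == 1%N]| in
           if odd c then 0 else (-1) ^+ (c./2).

(* Main.v *)
Require Import Defs.
From HB Require Import structures.
From mathcomp Require Import all_boot all_order all_algebra all_fingroup.
From mathcomp Require Import complex.
From mathcomp Require Import ring lra zify.
From Stdlib Require Import FunctionalExtensionality.
Import Order.TTheory GRing.Theory Num.Theory.
Local Open Scope ring_scope.
Local Open Scope complex_scope.
Set Implicit Arguments. Unset Strict Implicit. Unset Printing Implicit Defensive.

Definition cnt (d : nat) (t : midx 2 d) : nat := #|[set k | val (t k) == 1%N]|.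

Lemma cnt_sum d (t : midx 2 d) : cnt t = (\sum_k (val (t k) == 1%N))%N.
Proof. by rewrite /cnt -sum1dep_card big_mkcond. Qed.

Lemma cnt_ins d (j : 'I_d.+1) (i : 'I_2) (t : midx 2 d) :
  cnt (ins_idx j i t) = ((val i == 1%N) + cnt t)%N.
Proof.
rewrite !cnt_sum (bigD1_ord j) //= /ins_idx ffunE unlift_none; congr (_ + _)%N.
by apply: eq_bigr => k _; rewrite ffunE liftK.
Qed.
Notation cRe := complex.Re.
Notation cIm := complex.Im.
Definition ci (R : rcfType) : R[i] := Complex 0 1.
Definition Ft (R : rcfType) (d : nat) (w : R[i]) : tensor R 2 d :=
  fun t => cRe (w * ci R ^+ cnt t).
Arguments Ft {R} d w _.
Definition unitc (R : rcfType) (w : R[i]) := cRe w ^+ 2 + cIm w ^+ 2 = 1.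

Lemma ReD (R : rcfType) (x y : R[i]) : cRe (x + y) = cRe x + cRe y.
Proof. by case: x; case: y. Qed.
Lemma Re0 (R : rcfType) : cRe (0 : R[i]) = 0.
Proof. by []. Qed.
Lemma ReMr (R : rcfType) (a : R) (z : R[i]) : cRe (a%:C * z) = a * cRe z.
Proof. by case: z => x y /=; rewrite mul0r subr0. Qed.
Lemma Re_sum (R : rcfType) (I : finType) (F : I -> R[i]) :
  cRe (\sum_i F i) = \sum_i cRe (F i).
Proof. exact: (big_morph _ (@ReD R) (@Re0 R)). Qed.

Lemma cnt_idx2 (r c : 'I_2) : cnt (idx2 r c) = ((val r == 1%N) + (val c == 1%N))%N.
Proof. by rewrite cnt_sum big_ord_recr big_ord_recr big_ord0 /= /idx2 !ffunE /=. Qed.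

Lemma unitcM (R : rcfType) (w z : R[i]) : unitc w -> unitc z -> unitc (w * z).
Proof.
case: w => a b; case: z => c e; rewrite /unitc /= => h1 h2.
have -> : (a * c - b * e) ^+ 2 + (a * e + b * c) ^+ 2 = (a^+2 + b^+2) * (c^+2+e^+2) by ring.
by rewrite h1 h2 mulr1.
Qed.

Lemma orth_entries (R : rcfType) (n : nat) (M : 'M[R]_n) :
  orthogonal_mx M -> forall r s, \sum_k M r k * M s k = (r == s)%:R.
Proof.
move=> /matrixP h r s; move: (h r s); rewrite !mxE => <-.
by apply: eq_bigr => k _; rewrite mxE.
Qed.

Lemma Ft_contract (R : rcfType) d (j : 'I_d.+1) (u : 'I_2 -> R) w :
  contract j u (Ft d.+1 w) = Ft d (w * Complex (u ord0) (u ord_max)).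
Proof.
apply: functional_extensionality => t; rewrite /contract /Ft big_ord_recr big_ord_recr big_ord0 /=.
rewrite !cnt_ins /= add0n add1n exprS.
set x := w * _ ^+ _.
have -> : w * Complex (u ord0) (u ord_max) * ci R ^+ cnt t = x * Complex (u ord0) (u ord_max).
  by rewrite /x -!mulrA [Complex _ _ * _]mulrC.
rewrite mulrA [w * ci R]mulrC -mulrA -/x.
case: x => a b /=. rewrite /ord_max /=.
have -> : widen_ord (leqnSn 1) (Ordinal (ltnSn 0)) = ord0 :> 'I_2 by apply: val_inj.
ring.
Qed.

Lemma Ft_orth2 (R : rcfType) (w : R[i]) : unitc w -> orthogonal_mx (mat_of (Ft 2 w)).
Proof.
case: w => a b; rewrite /unitc /= => h.
apply/matrixP => r s; rewrite !mxE big_ord_recr big_ord_recr big_ord0 /=.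
rewrite !mxE /Ft !cnt_idx2 /=.
case: r => [[|[|r]]] hr //=; case: s => [[|[|s]]] hs //=; rewrite /= ?expr0 ?expr1 ?expr2 /=.
all: try (by ring); by transitivity (a^+2+b^+2); [ring|exact: h].
Qed.

Lemma unit_vec2 (R : rcfType) (u : 'I_2 -> R) : unit_vec u -> unitc (Complex (u ord0) (u ord_max)).
Proof.
rewrite /unit_vec /unitc big_ord_recr big_ord_recr big_ord0 /= add0r => <-.
by congr (_ ^+ 2 + _); apply: congr1; apply: val_inj.
Qed.

Lemma Ft_orth (R : rcfType) d (w : R[i]) : unitc w -> @orthogonal_tensor_aux R 2 d (Ft d.+2 w).
Proof.
elim: d w => [|d IH] w hw /=; first exact: Ft_orth2.
move=> j u hu; rewrite Ft_contract; apply: IH; apply: unitcM => //; exact: unit_vec2.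
Qed.

Lemma cnt_perm d (t : midx 2 d) (s : {perm 'I_d}) : cnt [ffun k => t (s k)] = cnt t.
Proof.
rewrite !cnt_sum [RHS](reindex_inj (@perm_inj _ s)) /=.
by apply: eq_bigr => k _; rewrite ffunE.
Qed.
Lemma Ft_sym (R : rcfType) d (w : R[i]) : symmetric_tensor (Ft d w).
Proof. by move=> s t; rewrite /Ft cnt_perm. Qed.

Definition eps (R : rcfType) (m : 'I_2) : R[i] := ci R ^+ (val m == 1%N).

Lemma ci2 (R : rcfType) : ci R ^+ 2 = -1.
Proof. by rewrite expr2; apply/eqP; rewrite eq_complex /=; apply/andP; split; apply/eqP; ring. Qed.

Lemma Re_ci_pow (R : rcfType) m :
  cRe (ci R ^+ m) = if odd m then 0 else (-1) ^+ m./2.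
Proof.
suff : cRe (ci R ^+ m) = (if odd m then 0 else (-1) ^+ m./2) /\
       cRe (ci R ^+ m.+1) = (if odd m.+1 then 0 else (-1) ^+ m.+1./2) by case.
elim: m => [|m [IH1 IH2]]; first by rewrite expr0 expr1 /=.
split => //.
rewrite exprS exprS mulrA -expr2 ci2 mulN1r.
have -> : cRe (- ci R ^+ m) = - cRe (ci R ^+ m) by case: (ci R ^+ m).
rewrite IH1 /=; case: (odd m) => /=; first by rewrite oppr0.
by rewrite exprS mulN1r.
Qed.

Lemma A0_eq (R : rcfType) d (t : midx 2 d) : @A0 R d t = cRe (ci R ^+ cnt t).
Proof. by rewrite Re_ci_pow. Qed.

Lemma prod_eps (R : rcfType) d (j : midx 2 d) : \prod_k eps R (j k) = ci R ^+ cnt j.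
Proof. by rewrite cnt_sum expr_sum. Qed.

Lemma act_A0 (R : rcfType) d (rho : 'M[R]_2) (t : midx 2 d) :
  act_diag rho (@A0 R d) t = cRe (\prod_k \sum_(m < 2) (rho (t k) m)%:C * eps R m).
Proof.
rewrite bigA_distr_bigA Re_sum /act_diag; apply: eq_bigr => j _.
rewrite big_split /= prod_eps -rmorph_prod ReMr A0_eq //.
Qed.

Lemma zeta_eq (R : rcfType) (x y : R) :
  (x%:C * eps R ord0 + y%:C * eps R ord_max) = Complex x y.
Proof.
rewrite /eps /= expr0 expr1 mulr1; apply/eqP; rewrite eq_complex /=.
by apply/andP; split; apply/eqP; ring.
Qed.

Lemma act_zeta (R : rcfType) d (rho : 'M[R]_2) (t : midx 2 d) :
  act_diag rho (@A0 R d) t =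
  cRe (\prod_k Complex (rho (t k) ord0) (rho (t k) ord_max)).
Proof.
rewrite act_A0; congr cRe; apply: eq_bigr => k _.
rewrite big_ord_recr big_ord_recr big_ord0 /= add0r -zeta_eq.
have -> : widen_ord (leqnSn 1) (Ordinal (ltnSn 0)) = ord0 :> 'I_2 by apply: val_inj.
by [].
Qed.

Lemma prod_zeta_gen (R : rcfType) d (z c : R[i]) (f : 'I_2 -> R[i]) (t : midx 2 d) :
  (forall m, f m = z * c ^+ (val m == 1%N)) ->
  \prod_k f (t k) = z ^+ d * c ^+ cnt t.
Proof.
move=> hf; rewrite (eq_bigr _ (fun k _ => hf (t k))) big_split /=.
by rewrite prodr_const card_ord cnt_sum expr_sum.
Qed.

Lemma unitc1 (R : rcfType) : unitc (1 : R[i]).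
Proof. by rewrite /unitc /= expr1n expr0n addr0. Qed.

Lemma unitcX (R : rcfType) (z : R[i]) n : unitc z -> unitc (z ^+ n).
Proof.
move=> hz; elim: n => [|n IH]; first by rewrite expr0; exact: unitc1.
by rewrite exprS; apply: unitcM.
Qed.

Lemma unitcJ (R : rcfType) (z : R[i]) : unitc z -> unitc (z^*%C).
Proof. by case: z => a b; rewrite /unitc /= sqrrN. Qed.

Lemma ReJ (R : rcfType) (z : R[i]) : cRe (z^*%C) = cRe z.
Proof. by case: z. Qed.

Lemma act_orth_Ft (R : rcfType) d (rho : 'M[R]_2) : orthogonal_mx rho ->
  exists w, unitc w /\ forall t, act_diag rho (@A0 R d) t = Ft d w t.
Proof.
move=> ho; have h := orth_entries ho.
move: (h ord0 ord0) (h ord_max ord_max) (h ord0 ord_max).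
rewrite !big_ord_recr !big_ord0 /= !add0r.
have -> : widen_ord (leqnSn 1) (Ordinal (ltnSn 0)) = ord0 :> 'I_2 by apply: val_inj.
set a := rho ord0 ord0; set b := rho ord0 (Ordinal (ltnSn 1)).
set c := rho ord_max ord0; set e := rho ord_max (Ordinal (ltnSn 1)).
move=> h1 h2 h3; rewrite ?mulr1n ?mulr0n in h1 h2 h3.
set l := a * e - b * c.
have hc : c = - l * b.
  transitivity (c * 1 - a * 0); first by ring.
  by rewrite -{1}h1 -h3 /l; ring.
have he : e = l * a.
  transitivity (e * 1 - b * 0); first by ring.
  by rewrite -{1}h1 -h3 /l; ring.
have hl : l ^+ 2 = 1.
  rewrite -h2 hc he; transitivity (l ^+ 2 * 1); first by ring.
  by rewrite -h1; ring.
have ord1E : Ordinal (ltnSn 1) = ord_max :> 'I_2 by apply: val_inj.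
move/eqP: hl; rewrite sqrf_eq1 => /orP [/eqP hl1 | /eqP hl1].
- exists (Complex a b ^+ d); split; first by apply: unitcX; rewrite /unitc /= -h1; ring.
  move=> t; rewrite act_zeta /Ft (@prod_zeta_gen _ _ (Complex a b) (ci R) (fun m => Complex (rho m ord0) (rho m ord_max))) //.
  move=> m; case: m => [[|[|m]]] hm //=.
  + rewrite expr0 mulr1 /a /b; congr Complex; first by congr (rho _ _); apply: val_inj.
    by rewrite -ord1E; congr (rho _ _); apply: val_inj.
  + rewrite expr1; apply/eqP; rewrite eq_complex /=.
    have -> : rho (Ordinal hm) ord0 = c by congr (rho _ _); apply: val_inj.
    have -> : rho (Ordinal hm) ord_max = e by rewrite /e -ord1E; congr (rho _ _); apply: val_inj.
    by rewrite hc he hl1; apply/andP; split; apply/eqP; ring.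
- exists ((Complex a b)^*%C ^+ d); split.
    by apply: unitcX; apply: unitcJ; rewrite /unitc /= -h1; ring.
  move=> t; rewrite act_zeta /Ft (@prod_zeta_gen _ _ (Complex a b) (- ci R) (fun m => Complex (rho m ord0) (rho m ord_max))) //.
    rewrite -ReJ rmorphM /= !rmorphXn /=; congr (cRe (_ * _ ^+ _)).
    by apply/eqP; rewrite eq_complex /=; apply/andP; split; apply/eqP; ring.
  move=> m; case: m => [[|[|m]]] hm //=.
  + rewrite expr0 mulr1 /a /b; congr Complex; first by congr (rho _ _); apply: val_inj.
    by rewrite -ord1E; congr (rho _ _); apply: val_inj.
  + rewrite expr1; apply/eqP; rewrite eq_complex /=.
    have -> : rho (Ordinal hm) ord0 = c by congr (rho _ _); apply: val_inj.
    have -> : rho (Ordinal hm) ord_max = e by rewrite /e -ord1E; congr (rho _ _); apply: val_inj.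
    by rewrite hc he hl1; apply/andP; split; apply/eqP; ring.
Qed.

Definition normc2 (R : rcfType) (z : R[i]) := cRe z ^+ 2 + cIm z ^+ 2.
Lemma normc2M (R : rcfType) (x y : R[i]) : normc2 (x * y) = normc2 x * normc2 y.
Proof. by case: x => a b; case: y => c e; rewrite /normc2 /=; ring. Qed.
Lemma normc2X (R : rcfType) (x : R[i]) n : normc2 (x ^+ n) = normc2 x ^+ n.
Proof.
elim: n => [|n IH]; first by rewrite expr0 expr0 /normc2 /= expr1n expr0n addr0.
by rewrite exprS normc2M IH exprS.
Qed.

Lemma unitc_root (R : rcfType) d (z : R[i]) : (0 < d)%N -> unitc (z ^+ d) -> unitc z.
Proof.
move=> hd; rewrite /unitc -/(normc2 _) -/(normc2 _) normc2X => h.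
have h0 : 0 <= normc2 z by rewrite /normc2 addr_ge0 // sqr_ge0.
by apply/eqP; rewrite -(eqrXn2 hd h0 ler01) expr1n h.
Qed.

Definition rot (R : rcfType) (z : R[i]) : 'M[R]_2 :=
  \matrix_(r, c) if val r == 0%N then (if val c == 0%N then cRe z else cIm z)
                 else (if val c == 0%N then - cIm z else cRe z).

Lemma rot_orth (R : rcfType) (z : R[i]) : unitc z -> orthogonal_mx (rot z).
Proof.
case: z => a b; rewrite /unitc /= => h.
apply/matrixP => r s; rewrite !mxE big_ord_recr big_ord_recr big_ord0 /= !mxE /=.
case: r => [[|[|r]]] hr //=; case: s => [[|[|s]]] hs //=.
all: try (by ring); by transitivity (a^+2+b^+2); [ring|exact: h].
Qed.

Lemma act_rot (R : rcfType) d (z : R[i]) (t : midx 2 d) :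
  act_diag (rot z) (@A0 R d) t = Ft d (z ^+ d) t.
Proof.
rewrite act_zeta /Ft (@prod_zeta_gen _ _ z (ci R) (fun m => Complex (rot z m ord0) (rot z m ord_max))) //.
move=> m; rewrite !mxE; case: m => [[|[|m]]] hm //=.
  by rewrite expr0 mulr1; case: z.
by rewrite expr1; case: z => x y; apply/eqP; rewrite eq_complex /=; apply/andP; split; apply/eqP; ring.
Qed.

Lemma Ft_act (R : rcfType) d (w : R[i]) : (0 < d)%N -> unitc w ->
  exists rho : 'M[R]_2, orthogonal_mx rho /\ forall t, Ft d w t = act_diag rho (@A0 R d) t.
Proof.
move=> hd hw; set z : R[i] := d.-root w.
have hz : z ^+ d = w by rewrite /z rootCK.
exists (rot z); split.
  by apply: rot_orth; apply: (unitc_root hd); rewrite hz.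
by move=> t; rewrite act_rot hz.
Qed.

Lemma ins_perm n d (i : 'I_n) (t : midx n d) (s : {perm 'I_d}) :
  [ffun k => ins_idx ord0 i t (lift_perm ord0 ord0 s k)] = ins_idx ord0 i [ffun k => t (s k)].
Proof.
apply/ffunP => k; rewrite !ffunE; case: (unliftP ord0 k) => [k'|] ->.
  by rewrite lift_perm_lift /ins_idx !ffunE !liftK.
by rewrite lift_perm_id /ins_idx ?ffunE unlift_none.
Qed.

Lemma sym_contract (R : rcfType) n d (u : 'I_n -> R) (A : tensor R n d.+1) :
  symmetric_tensor A -> symmetric_tensor (contract ord0 u A).
Proof.
move=> hA s t; rewrite /contract; apply: eq_bigr => i _.
by rewrite -ins_perm hA.
Qed.

Definition ev (R : rcfType) n (i : 'I_n) : 'I_n -> R := fun k => (k == i)%:R.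

Lemma contract_ev (R : rcfType) n d (i : 'I_n) (A : tensor R n d.+1) t :
  contract ord0 (ev R i) A t = A (ins_idx ord0 i t).
Proof.
rewrite /contract (bigD1 i) //= /ev eqxx mulr1 big1 ?addr0 // => k /negbTE ->.
by rewrite mulr0.
Qed.

Lemma unit_ev (R : rcfType) n (i : 'I_n) : unit_vec (ev R i).
Proof.
rewrite /unit_vec (bigD1 i) //= /ev eqxx expr1n big1 ?addr0 // => k /negbTE ->.
by rewrite expr0n.
Qed.

Definition o0 : 'I_3 := ord0.
Definition o1 : 'I_3 := Ordinal (isT : (1 < 3)%N).
Definition o2 : 'I_3 := Ordinal (isT : (2 < 3)%N).

Lemma insE0 n d (i : 'I_n) (t : midx n d) (h : (0 < d.+1)%N) :
  ins_idx ord0 i t (Ordinal h) = i.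
Proof. by rewrite /ins_idx ffunE (_ : Ordinal h = ord0) ?unlift_none //; apply: val_inj. Qed.
Lemma insE1 n d (i : 'I_n) (t : midx n d.+1) (h : (1 < d.+2)%N) :
  ins_idx ord0 i t (Ordinal h) = t ord0.
Proof. by rewrite /ins_idx ffunE (_ : Ordinal h = lift ord0 ord0) ?liftK //; apply: val_inj. Qed.
Lemma insE2 n (i : 'I_n) (t : midx n 2) (h : (2 < 3)%N) :
  ins_idx ord0 i t (Ordinal h) = t (Ordinal (isT : (1 < 2)%N)).
Proof.
by rewrite /ins_idx ffunE (_ : Ordinal h = lift ord0 (Ordinal (isT : (1 < 2)%N))) ?liftK //; apply: val_inj.
Qed.
Lemma idx2E0 n (r c : 'I_n) (h : (0 < 2)%N) : idx2 r c (Ordinal h) = r.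
Proof. by rewrite /idx2 ffunE. Qed.
Lemma idx2E1 n (r c : 'I_n) (h : (1 < 2)%N) : idx2 r c (Ordinal h) = c.
Proof. by rewrite /idx2 ffunE. Qed.

Lemma unl0 d (h : (0 < d.+1)%N) : unlift ord0 (Ordinal h) = None.
Proof. by rewrite (_ : Ordinal h = ord0) ?unlift_none //; apply: val_inj. Qed.
Lemma unl1 d (h : (1 < d.+2)%N) : unlift ord0 (Ordinal h) = Some ord0.
Proof. by rewrite (_ : Ordinal h = lift ord0 ord0) ?liftK //; apply: val_inj. Qed.
Lemma unl2 (h : (2 < 3)%N) : unlift ord0 (Ordinal h) = Some (ord_max : 'I_2).
Proof. by rewrite (_ : Ordinal h = lift ord0 ord_max) ?liftK //; apply: val_inj. Qed.

Lemma swap12 n (i r c : 'I_n) :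
  [ffun k => ins_idx ord0 i (idx2 r c) (tperm o1 o2 k)] = ins_idx ord0 i (idx2 c r).
Proof.
apply/ffunP => k; rewrite !ffunE permE /=.
by case: k => [[|[|[|k]]] hk] //=; rewrite /o1 /o2 ?unl0 ?unl1 ?unl2 /idx2 ?ffunE.
Qed.

Lemma swap01 n (i r c : 'I_n) :
  [ffun k => ins_idx ord0 i (idx2 r c) (tperm o0 o1 k)] = ins_idx ord0 r (idx2 i c).
Proof.
apply/ffunP => k; rewrite !ffunE permE /=.
by case: k => [[|[|[|k]]] hk] //=; rewrite /o0 /o1 ?unl0 ?unl1 ?unl2 /idx2 ?ffunE.
Qed.

Definition a3 (R : rcfType) n (A : tensor R n 3) (i r c : 'I_n) := A (ins_idx ord0 i (idx2 r c)).

Lemma a3_sym12 (R : rcfType) n (A : tensor R n 3) i r c :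
  symmetric_tensor A -> a3 A i r c = a3 A i c r.
Proof. by move=> hA; rewrite /a3 -swap12 hA. Qed.

Lemma a3_sym01 (R : rcfType) n (A : tensor R n 3) i r c :
  symmetric_tensor A -> a3 A i r c = a3 A r i c.
Proof. by move=> hA; rewrite /a3 -swap01 hA. Qed.

Lemma a3_O1 (R : rcfType) n (A : tensor R n 3) i r s :
  @orthogonal_tensor_aux R n 1 A -> \sum_k a3 A i r k * a3 A i s k = (r == s)%:R.
Proof.
move=> hA; have := orth_entries (hA ord0 _ (unit_ev R i)) r s.
by rewrite /mat_of => <-; apply: eq_bigr => k _; rewrite !mxE !contract_ev.
Qed.

Lemma contract_lin (R : rcfType) n d (j : 'I_d.+1) (q : R) (f g : 'I_n -> R) (A : tensor R n d.+1) t :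
  contract j (fun k => q * (f k + g k)) A t = q * (contract j f A t + contract j g A t).
Proof.
rewrite /contract -big_split mulr_sumr; apply: eq_bigr => k _; by rewrite mulrCA mulrDr.
Qed.

Lemma a3_O2 (R : rcfType) n (A : tensor R n 3) i j r s : i != j ->
  @orthogonal_tensor_aux R n 1 A ->
  \sum_k (a3 A i r k * a3 A j s k + a3 A j r k * a3 A i s k) = 0.
Proof.
move=> hij hA.
set q : R := Num.sqrt (2^-1).
have hq : q ^+ 2 = 2^-1 by rewrite /q sqr_sqrtr // invr_ge0 ler0n.
set u := fun k => q * (ev R i k + ev R j k).
have hu : unit_vec u.
  rewrite /unit_vec /u (bigD1 i) //= (bigD1 j) //= 1?eq_sym // big1 ?addr0.
    rewrite /ev eqxx (negbTE hij) eq_sym (negbTE hij) addr0 add0r eqxx /= !mulr1 hq.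
    by field.
  move=> k /andP [hk1 hk2]; rewrite /ev (negbTE hk1) (negbTE hk2) addr0 mulr0.
  by rewrite expr0n.
have := orth_entries (hA ord0 _ hu) r s.
rewrite /mat_of.
under eq_bigr => k _ do rewrite !mxE /u !contract_lin !contract_ev.
rewrite -/(a3 A i r _).
have e : forall k, q * (a3 A i r k + a3 A j r k) * (q * (a3 A i s k + a3 A j s k)) =
   q ^+ 2 * (a3 A i r k * a3 A i s k) + q ^+ 2 * (a3 A j r k * a3 A j s k)
   + q ^+ 2 * (a3 A i r k * a3 A j s k + a3 A j r k * a3 A i s k).
  by move=> k; ring.
have o1 := a3_O1 i r s hA; have o2 := a3_O1 j r s hA; rewrite /a3 in e o1 o2.
rewrite (eq_bigr _ (fun k _ => e k)) big_split big_split /= -!mulr_sumr o1 o2 hq.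
rewrite /a3; set X := \sum_k _; set D := (r == s)%:R => H.
have -> : X = 2 * (2^-1 * D + 2^-1 * D + 2^-1 * X) - 2 * D by field.
by rewrite H subrr.
Qed.

Lemma a3_key (R : rcfType) n (A : tensor R n 3) j (z : 'I_n -> R) s :
  symmetric_tensor A -> @orthogonal_tensor_aux R n 1 A ->
  \sum_r a3 A j s r * (\sum_k a3 A j r k * z k) = z s.
Proof.
move=> hS hA.
under eq_bigr => r _ do rewrite mulr_sumr.
rewrite exchange_big /=.
under eq_bigr => k _ do (under eq_bigr => r _ do rewrite mulrA (a3_sym12 _ r k hS); rewrite -mulr_suml (a3_O1 _ _ _ hA)).
rewrite (bigD1 s) //= eqxx mul1r big1 ?addr0 // => k hk.
by rewrite eq_sym (negbTE hk) mul0r.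
Qed.

Lemma a3_inj (R : rcfType) n (A : tensor R n 3) j (x y : 'I_n -> R) :
  symmetric_tensor A -> @orthogonal_tensor_aux R n 1 A ->
  (forall r, \sum_k a3 A j r k * x k = \sum_k a3 A j r k * y k) -> forall s, x s = y s.
Proof.
move=> hS hA H s; rewrite -(a3_key j x s hS hA) -(a3_key j y s hS hA).
by apply: eq_bigr => r _; rewrite H.
Qed.

Lemma a3_claim1 (R : rcfType) n (A : tensor R n 3) i j r : i != j ->
  symmetric_tensor A -> @orthogonal_tensor_aux R n 1 A ->
  \sum_k a3 A j r k * a3 A i i k = - (r == j)%:R.
Proof.
move=> hij hS hA; have := a3_O2 r i hij hA.
rewrite big_split /=.
under eq_bigr => k _ do rewrite (a3_sym01 j i k hS).
rewrite (a3_O1 i r j hA) => /eqP; rewrite addrC addr_eq0 => /eqP ->.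
by [].
Qed.

Lemma part1_base (R : rcfType) n (A : tensor R n 3) :
  symmetric_tensor A -> @orthogonal_tensor_aux R n 1 A -> (n <= 2)%N.
Proof.
move=> hS hA; rewrite leqNgt; apply/negP => hn.
have h0 : (0 < n)%N by apply: leq_trans hn.
have h1 : (1 < n)%N by apply: leq_trans hn.
set i0 : 'I_n := Ordinal h0; set i1 : 'I_n := Ordinal h1; set i2 : 'I_n := Ordinal hn.
have n01 : i0 != i1 by []. have n21 : i2 != i1 by []. have n20 : i2 != i0 by [].
have hv : forall k, a3 A i0 i0 k = a3 A i2 i2 k.
  apply: (@a3_inj _ _ _ i1 _ _ hS hA) => r.
  by by rewrite (a3_claim1 r n01 hS hA) (a3_claim1 r n21 hS hA).
have c1 := a3_claim1 i0 n20 hS hA.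
have c2 := a3_O1 i0 i0 i0 hA.
rewrite eqxx in c1 c2.
have e : \sum_k a3 A i0 i0 k * a3 A i2 i2 k = \sum_k a3 A i0 i0 k * a3 A i0 i0 k.
  by apply: eq_bigr => k _; rewrite hv.
rewrite e in c1.
rewrite c1 in c2.
move: c2; rewrite /= ?mulr1n => c2; lra.
Qed.

Lemma cnt_count d (t : midx 2 d) : cnt t = count (fun k => val (t k) == 1%N) (enum 'I_d).
Proof.
rewrite /cnt cardsE cardE /enum_mem size_filter /enum_mem.
rewrite (eq_filter (a2 := predT)) // filter_predT.
by apply: eq_count => k.
Qed.

Lemma count_cnt d (t : midx 2 d) (a : pred 'I_2) :
  count (fun k => a (t k)) (enum 'I_d) =
  if a ord0 then (if a ord_max then d else (d - cnt t)%N) else (if a ord_max then cnt t else 0%N).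
Proof.
have ha : forall k, a (t k) = if val (t k) == 1%N then a ord_max else a ord0.
  move=> k; case: (t k) => [[|[|m]] hm] //=; by apply: congr1; apply: val_inj.
rewrite (eq_count ha) cnt_count.
case: (a ord0); case: (a ord_max) => /=.
- rewrite (eq_count (a2 := predT)) ?count_predT ?size_enum_ord // => k; by case: ifP.
- have e := count_predC (fun k => val (t k) == 1%N) (enum 'I_d).
  rewrite size_enum_ord in e.
  have -> : count (fun k => if val (t k) == 1%N then false else true) (enum 'I_d)
     = count (predC (fun k => val (t k) == 1%N)) (enum 'I_d).
    by apply: eq_count => k /=; case: ifP.
  move: e; set x := count _ _; set y := count _ _; lia.
- by apply: eq_count => k; case: ifP.
- rewrite (eq_count (a2 := pred0)) ?count_pred0 // => k; by case: ifP.
Qed.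

Lemma mkt d (f : 'I_d -> 'I_2) : map f (enum 'I_d) = [tuple f k | k < d] :> seq _.
Proof. by rewrite -val_ord_tuple. Qed.
Lemma cm d (f : 'I_d -> 'I_2) (a : pred 'I_2) :
  count a (map f (enum 'I_d)) = count (fun k => a (f k)) (enum 'I_d).
Proof. by rewrite count_map. Qed.

Lemma cnt_perm_exists d (t t' : midx 2 d) : cnt t = cnt t' ->
  exists p : {perm 'I_d}, forall k, t k = t' (p k).
Proof.
move=> h.
have hp : perm_eq (map t (enum 'I_d)) [tuple t' k | k < d].
  rewrite -mkt; apply/seq.permP => a.
  by rewrite !cm !count_cnt h.
case/tuple_permP: hp => p hp; exists p => k.
have := congr1 (fun s => nth (t k) s k) hp.
rewrite (nth_map k) ?size_enum_ord // nth_ord_enum => ->.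
by rewrite -tnth_nth !tnth_mktuple.
Qed.

Lemma sym_cnt (R : rcfType) d (A : tensor R 2 d) (t t' : midx 2 d) :
  symmetric_tensor A -> cnt t = cnt t' -> A t = A t'.
Proof.
move=> hA h; case: (cnt_perm_exists h) => p hp.
rewrite -(hA p t'); congr A; apply/ffunP => k; by rewrite ffunE hp.
Qed.
Lemma alg3 (R : rcfType) (p q r s : R) : p * p + q * q = 1 -> q * q + r * r = 1 ->
  p * q + q * r = 0 -> r * r + s * s = 1 -> p * r + q * q + (q * s + r * r) = 0 ->
  r = - p /\ s = - q.
Proof.
move=> e1 e2 e3 e5 e6.
have hr : r = - p.
  have h1 : q * (p + r) == 0 by apply/eqP; rewrite -e3; ring.
  rewrite mulf_eq0 in h1; case/orP: h1 => [/eqP hq|hpr]; last first.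
    by apply/eqP; rewrite -addr_eq0 addrC.
  rewrite hq !mul0r !add0r ?addr0 in e1 e2 e6.
  have h2 : (p + r) * (p + r) == 0.
    apply/eqP; transitivity (p * p + r * r + 2 * (p * r + r * r) - 2 * (r * r)); first by ring.
    by rewrite e6 e1 e2; ring.
  rewrite mulf_eq0 orbb in h2.
  by apply/eqP; rewrite -addr_eq0 addrC.
split => //.
rewrite hr in e2 e6.
have h1 : q * (q + s) == 0 by apply/eqP; rewrite -e6; ring.
rewrite mulf_eq0 in h1; case/orP: h1 => [/eqP hq|hqs]; last first.
  by apply/eqP; rewrite -addr_eq0 addrC.
rewrite hq oppr0; rewrite hq mul0r addr0 in e1; rewrite hr in e5.
have h2 : s * s == 0.
  apply/eqP; transitivity ((- p * - p + s * s) - p * p); first by ring.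
  by rewrite e5 e1 subrr.
by rewrite mulf_eq0 orbb in h2; apply/eqP.
Qed.

Definition b2 (b : bool) : 'I_2 := if b then ord_max else ord0.
Definition rep3 (m : nat) : midx 2 3 :=
  ins_idx ord0 (b2 (3 <= m)%N) (idx2 (b2 (2 <= m)%N) (b2 (1 <= m)%N)).

Lemma cnt_le d (t : midx 2 d) : (cnt t <= d)%N.
Proof. by rewrite /cnt; apply: leq_trans (max_card _) _; rewrite card_ord. Qed.

Lemma cnt_rep3 m : (m <= 3)%N -> cnt (rep3 m) = m.
Proof. by case: m => [|[|[|[|m]]]] // _; rewrite /rep3 cnt_ins cnt_idx2. Qed.

Lemma A3g (R : rcfType) (A : tensor R 2 3) t :
  symmetric_tensor A -> A t = A (rep3 (cnt t)).
Proof. by move=> hA; apply: sym_cnt => //; rewrite cnt_rep3 // cnt_le. Qed.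

Lemma a3g (R : rcfType) (A : tensor R 2 3) i r c :
  symmetric_tensor A ->
  a3 A i r c = A (rep3 ((val i == 1%N) + ((val r == 1%N) + (val c == 1%N)))).
Proof. by move=> hA; rewrite /a3 (A3g _ hA) cnt_ins cnt_idx2. Qed.

Lemma part2_base (R : rcfType) (A : tensor R 2 3) :
  symmetric_tensor A -> @orthogonal_tensor_aux R 2 1 A ->
  exists w, unitc w /\ forall t, A t = Ft 3 w t.
Proof.
move=> hS hA.
have O10 := a3_O1 ord0 ord0 ord0 hA; have O11 := a3_O1 ord0 ord_max ord_max hA.
have O12 := a3_O1 ord0 ord0 ord_max hA.
have O13 := a3_O1 ord_max ord0 ord0 hA; have O14 := a3_O1 ord_max ord_max ord_max hA.
have O15 := a3_O1 ord_max ord0 ord_max hA.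
have O2 := a3_O2 ord0 ord_max (isT : (ord0 : 'I_2) != ord_max) hA.
move: O10 O11 O12 O13 O14 O15 O2.
rewrite !big_ord_recr !big_ord0 /= !add0r !(a3g _ _ _ hS) /=.
set p := A (rep3 0); set q := A (rep3 1); set r := A (rep3 2); set s := A (rep3 3).
move=> e1 e2 e3 _ e5 _ e7.
case: (alg3 e1 e2 e3 e5 e7) => hr hs.
exists (Complex p (- q)); split.
  by rewrite /unitc /= sqrrN !expr2.
move=> t; rewrite (A3g t hS) /Ft; have := cnt_le t.
case: (cnt t) => [|[|[|[|m]]]] // _; rewrite -/p -/q -/r -/s /=.
- by ring.
- by ring.
- by rewrite hr; ring.
- by rewrite hs; ring.
Qed.

Definition zt d : midx 2 d := [ffun=> ord0].
Lemma cnt_zt d : cnt (zt d) = 0%N.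
Proof. by rewrite cnt_sum big1 // => k _; rewrite ffunE. Qed.

Definition tail n d (t : midx n d.+1) : midx n d := [ffun k => t (lift ord0 k)].
Lemma ins_tail n d (t : midx n d.+1) : ins_idx ord0 (t ord0) (tail t) = t.
Proof.
apply/ffunP => k; rewrite /ins_idx ffunE; case: (unliftP ord0 k) => [k'|] ->.
  by rewrite ffunE.
by [].
Qed.

Lemma part2_gen (R : rcfType) d : forall A : tensor R 2 d.+3,
  symmetric_tensor A -> @orthogonal_tensor_aux R 2 d.+1 A ->
  exists w, unitc w /\ forall t, A t = Ft d.+3 w t.
Proof.
elim: d => [|d IH] A hS hA; first exact: part2_base.
have [w0 [hw0 H0]] := IH _ (sym_contract (ev R ord0) hS) (hA ord0 _ (unit_ev R ord0)).
have [w1 [hw1 H1]] := IH _ (sym_contract (ev R ord_max) hS) (hA ord0 _ (unit_ev R ord_max)).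
have {}H0 : forall t, A (ins_idx ord0 ord0 t) = Ft d.+3 w0 t by move=> t; rewrite -H0 contract_ev.
have {}H1 : forall t, A (ins_idx ord0 ord_max t) = Ft d.+3 w1 t by move=> t; rewrite -H1 contract_ev.
have E1 : A (ins_idx ord0 ord0 (ins_idx ord0 ord_max (zt d.+2))) =
          A (ins_idx ord0 ord_max (ins_idx ord0 ord0 (zt d.+2))).
  by apply: sym_cnt => //; rewrite !cnt_ins cnt_zt.
have E2 : A (ins_idx ord0 ord0 (ins_idx ord0 ord_max (ins_idx ord0 ord_max (zt d.+1)))) =
          A (ins_idx ord0 ord_max (ins_idx ord0 ord0 (ins_idx ord0 ord_max (zt d.+1)))).
  by apply: sym_cnt => //; rewrite !cnt_ins cnt_zt.
rewrite H0 H1 /Ft !cnt_ins cnt_zt /= in E1.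
rewrite H0 H1 /Ft !cnt_ins cnt_zt /= in E2.
have hw : w1 = ci R * w0.
  move: E1 E2; case: w0 {H0 hw0} => a b; case: w1 {H1 hw1} => x y /=.
  by move=> h1 h2; apply/eqP; rewrite eq_complex /=; apply/andP; split; apply/eqP; lra.
exists w0; split => // t.
rewrite -(ins_tail t); case: (t ord0) => [[|[|m]] hm] //.
  have -> : Ordinal hm = ord0 :> 'I_2 by apply: val_inj.
  by rewrite H0 /Ft cnt_ins.
have -> : Ordinal hm = ord_max :> 'I_2 by apply: val_inj.
rewrite H1 /Ft cnt_ins hw /= add1n exprS.
by congr cRe; rewrite !mulrA [ci R * w0]mulrC.
Qed.

Lemma part1_gen (R : rcfType) d : forall n (A : tensor R n d.+3), (0 < n)%N ->
  symmetric_tensor A -> @orthogonal_tensor_aux R n d.+1 A -> (n <= 2)%N.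
Proof.
elim: d => [|d IH] n A h0 hS hA; first exact: part1_base hS hA.
exact: (IH n _ h0 (sym_contract (ev R (Ordinal h0)) hS) (hA ord0 _ (unit_ev R (Ordinal h0)))).
Qed.

Theorem proposition1p6 (R : rcfType) (d : nat) (hd : (3 <= d)%N) :
  (forall (n : nat) (A : tensor R n d), (0 < n)%N ->
     symmetric_tensor A -> orthogonal_tensor A -> n = 1%N \/ n = 2%N) /\
  (forall A : tensor R 2 d,
     (symmetric_tensor A /\ orthogonal_tensor A) <->
     exists rho : 'M[R]_2, orthogonal_mx rho /\ (forall t, A t = act_diag rho (@A0 R d) t)).
Proof.
case: d hd => [|[|[|d]]] // _; split.
  move=> n A h0 hS hO; have := part1_gen h0 hS hO.
  by case: n {A hS hO} h0 => [|[|[|n]]] //; auto.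
move=> A; split.
  case=> hS hO; have [w [hw Hw]] := part2_gen hS hO.
  have [rho [hrho Hr]] := Ft_act (isT : (0 < d.+3)%N) hw.
  by exists rho; split => // t; rewrite Hw Hr.
case=> rho [hrho H]; have [w [hw Hw]] := act_orth_Ft d.+3 hrho.
have eA : A = Ft d.+3 w by apply: functional_extensionality => t; rewrite H Hw.
rewrite eA; split; first exact: Ft_sym.
exact: Ft_orth.
Qed.
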